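(* $M\otimes-$ is a functor on $\mathsf{SquaMS}$: for every square metric space $X$, the quotient distance on $M\otimes X$ is a metric, $(M\otimes X,S_{M\otimes X})$ is a square metric space, and for every morphism $f\colon X\to Y$ of $\mathsf{SquaMS}$, $M\otimes f$ is a morphism $M\otimes X\to M\otimes Y$; moreover identities and composition are preserved.
   Context: Let $M_0=\{(r,s)\in[0,1]^2: r\in\{0,1\}\text{ or } s\in\{0,1\}\}$. A square metric space is a pair $(X,S_X)$ with $X$ a metric space with all distances at most $2$ and $S_X\colon M_0\to X$ injective such that (sq1) for $i\in\{0,1\}$, $r,s\in[0,1]$: $d_X(S_X(i,r),S_X(i,s))=|s-r|$ and $d_X(S_X(r,i),S_X(s,i))=|s-r|$; (sq2) $d_X(S_X(r,s),S_X(t,u))\ge|r-t|+|s-u|$. $\mathsf{SquaMS}$: these objects, with short maps $f$ satisfying $f\circ S_X=S_Y$ as morphisms. Let $N=\{0,1,2\}^2$, $M=N\setminus\{(1,1)\}$, also viewed as points of $\mathbb{R}^2$. For $X$ in $\mathsf{SquaMS}$, $M\otimes X=(M\times X)/\!\sim$, where $\sim$ is the equivalence relation generated by $(m,S_X(p))\sim(n,S_X(q))$ whenever $m,n\in M$ differ by exactly $1$ in exactly one coordinate and $(m+p)/3=(n+q)/3$ in $\mathbb{R}^2$; $m\otimes x$ is the class of $(m,x)$. On $M\times X$ put $d((a,u),(b,v))=\frac13 d_X(u,v)$ if $a=b$ and $2$ otherwise; the quotient distance $d(m\otimes x,n\otimes y)$ is the infimum over finite sequences $(m,x)=z_0,\dots,z_k=(n,y)$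 in $M\times X$ of the sum over consecutive pairs of $0$ if they are $\sim$-related and $d(z_i,z_{i+1})$ otherwise. $S_{M\otimes X}(p)=m\otimes S_X(3p-m)$ for any $m\in M$ with $p\in(m+[0,1]^2)/3$, and $(M\otimes f)(m\otimes x)=m\otimes f(x)$. *)

(* Defs.v *)
From Stdlib Require Import Reals Lra Relations ClassicalEpsilon.
From Coquelicot Require Import Coquelicot.
Open Scope R_scope.

Definition inI (r : R) : Prop := 0 <= r <= 1.
Definition inM0 (p : R * R) : Prop :=
  inI (fst p) /\ inI (snd p) /\
  (fst p = 0 \/ fst p = 1 \/ snd p = 0 \/ snd p = 1).

Record IsMetric (T : Type) (d : T -> T -> R) : Prop := {
  met_nonneg : forall x y, 0 <= d x y;
  met_zero   : forall x y, d x y = 0 <-> x = y;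
  met_sym    : forall x y, d x y = d y x;
  met_tri    : forall x y z, d x z <= d x y + d y z }.

Record IsSqMS (T : Type) (d : T -> T -> R) (S : R * R -> T) : Prop := {
  sq_metric : IsMetric T d;
  sq_bound  : forall x y, d x y <= 2;
  sq_inj    : forall p q, inM0 p -> inM0 q -> S p = S q -> p = q;
  sq1_v : forall (i r s : R), (i = 0 \/ i = 1) -> inI r -> inI s ->
            d (S (i, r)) (S (i, s)) = Rabs (s - r);
  sq1_h : forall (i r s : R), (i = 0 \/ i = 1) -> inI r -> inI s ->
            d (S (r, i)) (S (s, i)) = Rabs (s - r);
  sq2 : forall p q, inM0 p -> inM0 q ->
            d (S p) (S q) >= Rabs (fst p - fst q) + Rabs (snd p - snd q) }.

Record SqMS : Type := {
  car : Type;
  sqd : car -> car -> R;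
  sqS : R * R -> car;
  sq_ax : IsSqMS car sqd sqS }.

Definition IsHom (T U : Type) (dT : T -> T -> R) (dU : U -> U -> R)
  (ST : R * R -> T) (SU : R * R -> U) (f : T -> U) : Prop :=
  (forall a b, dU (f a) (f b) <= dT a b) /\
  (forall p, inM0 p -> f (ST p) = SU p).

(* ---------- M = {0,1,2}^2 \ {(1,1)} ---------- *)
Inductive Mpt : Type := m00 | m01 | m02 | m10 | m12 | m20 | m21 | m22.
Definition Mpt_eq_dec (a b : Mpt) : {a = b} + {a <> b}.
Proof. decide equality. Defined.
Definition mx (m : Mpt) : R :=
  match m with m00 | m01 | m02 => 0 | m10 | m12 => 1 | _ => 2 end.
Definition my (m : Mpt) : R :=
  match m with m00 | m10 | m20 => 0 | m01 | m21 => 1 | _ => 2 end.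

Definition adjM (m n : Mpt) : Prop :=
  (mx m = mx n /\ Rabs (my m - my n) = 1) \/
  (my m = my n /\ Rabs (mx m - mx n) = 1).

Section Tensor.
Variable X : SqMS.
Let T := car X.
Let dX := sqd X.
Let SX := sqS X.

Definition rel0 (z w : Mpt * T) : Prop :=
  exists p q, inM0 p /\ inM0 q /\ adjM (fst z) (fst w) /\
    snd z = SX p /\ snd w = SX q /\
    (mx (fst z) + fst p) / 3 = (mx (fst w) + fst q) / 3 /\
    (my (fst z) + snd p) / 3 = (my (fst w) + snd q) / 3.

Definition tsim : relation (Mpt * T) := clos_refl_sym_trans _ rel0.

Definition dMX (z w : Mpt * T) : R :=
  if Mpt_eq_dec (fst z) (fst w) then / 3 * dX (snd z) (snd w) else 2.

Definition step_cost (a b : Mpt * T) (s : R) : Prop :=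
  (tsim a b /\ s = 0) \/ (~ tsim a b /\ s = dMX a b).

Inductive ChainCost : Mpt * T -> Mpt * T -> R -> Prop :=
| cc_nil : forall z, ChainCost z z 0
| cc_cons : forall z0 z1 w s c,
    step_cost z0 z1 s -> ChainCost z1 w c -> ChainCost z0 w (s + c).

Definition qdist (z w : Mpt * T) : R := real (Glb_Rbar (fun c => ChainCost z w c)).

Definition MT : Type := { P : Mpt * T -> Prop | exists z, P = tsim z }.
Definition cls (z : Mpt * T) : MT := exist _ (tsim z) (ex_intro _ z eq_refl).
Definition rep (c : MT) : Mpt * T :=
  proj1_sig (constructive_indefinite_description _ (proj2_sig c)).

Definition MTdist (c c' : MT) : R := qdist (rep c) (rep c').

Definition InCell (m : Mpt) (p : R * R) : Prop :=
  mx m <= 3 * fst p <= mx m + 1 /\ my m <= 3 * snd p <= my m + 1.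

Definition cellOf (p : R * R) : Mpt := epsilon (inhabits m00) (fun m => InCell m p).

Definition MTS (p : R * R) : MT :=
  let m := cellOf p in cls (m, SX (3 * fst p - mx m, 3 * snd p - my m)).

End Tensor.

Definition MTmap (X Y : SqMS) (f : car X -> car Y) (c : MT X) : MT Y :=
  cls Y (fst (rep X c), f (snd (rep X c))).

(* Main.v *)
Require Import Defs.
From Stdlib Require Import Reals Lra Relations ClassicalEpsilon Classical ProofIrrelevance FunctionalExtensionality PropExtensionality.
From Coquelicot Require Import Coquelicot.
Open Scope R_scope.

Ltac rabs := unfold Rabs in *; repeat match goal with
  | |- context [Rcase_abs ?x] => destruct (Rcase_abs x)
  | H: context [Rcase_abs ?x] |- _ => destruct (Rcase_abs x) end; lra.

Lemma glb_props (E : R -> Prop) : (exists c, E c) -> (forall c, E c -> 0 <= c) ->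
  (forall c, E c -> real (Glb_Rbar E) <= c) /\
  (forall L, (forall c, E c -> L <= c) -> L <= real (Glb_Rbar E)).
Proof.
  intros [c0 Hc0] Hpos. destruct (Glb_Rbar_correct E) as [Hlb Hglb].
  destruct (Glb_Rbar E) as [g| |] eqn:Hg.
  - split.
    + intros c Ec. exact (Hlb c Ec).
    + intros L HL. exact (Hglb L HL).
  - exfalso. exact (Hlb c0 Hc0).
  - exfalso. exact (Hglb 0 Hpos).
Qed.

Lemma mx_range m : mx m = 0 \/ mx m = 1 \/ mx m = 2.
Proof. destruct m; simpl; lra. Qed.
Lemma my_range m : my m = 0 \/ my m = 1 \/ my m = 2.
Proof. destruct m; simpl; lra. Qed.

Section S.
Variable X : SqMS.
Notation T := (car X).
Notation d := (sqd X).
Notation S := (sqS X).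
Notation tsim := (tsim X).

Lemma Xax : IsSqMS T d S. Proof. exact (sq_ax X). Qed.
Lemma d_nonneg x y : 0 <= d x y. Proof. apply (met_nonneg _ _ (sq_metric _ _ _ Xax)). Qed.
Lemma d_sym x y : d x y = d y x. Proof. apply (met_sym _ _ (sq_metric _ _ _ Xax)). Qed.
Lemma d_tri x y z : d x z <= d x y + d y z. Proof. apply (met_tri _ _ (sq_metric _ _ _ Xax)). Qed.
Lemma d_zero x y : d x y = 0 <-> x = y. Proof. apply (met_zero _ _ (sq_metric _ _ _ Xax)). Qed.
Lemma d_refl x : d x x = 0. Proof. apply d_zero; auto. Qed.
Lemma d_bound x y : d x y <= 2. Proof. apply (sq_bound _ _ _ Xax). Qed.

Lemma dMX_nonneg z w : 0 <= dMX X z w.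
Proof. unfold dMX. destruct Mpt_eq_dec. pose proof (d_nonneg (snd z) (snd w)); lra. lra. Qed.
Lemma dMX_le2 z w : dMX X z w <= 2.
Proof. unfold dMX. destruct Mpt_eq_dec. pose proof (d_bound (snd z) (snd w)); lra. lra. Qed.
Lemma dMX_sym z w : dMX X z w = dMX X w z.
Proof. unfold dMX. destruct Mpt_eq_dec; destruct Mpt_eq_dec; try congruence. rewrite d_sym; auto. Qed.

Lemma tsim_sym z w : tsim z w -> tsim w z.
Proof. intros; apply rst_sym; auto. Qed.
Lemma tsim_trans x y z : tsim x y -> tsim y z -> tsim x z.
Proof. intros; eapply rst_trans; eauto. Qed.
Lemma tsim_refl x : tsim x x.
Proof. apply rst_refl. Qed.

Lemma step_nonneg a b s : step_cost X a b s -> 0 <= s.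
Proof. intros [[_ ->]|[_ ->]]. lra. apply dMX_nonneg. Qed.
Lemma step_sym a b s : step_cost X a b s -> step_cost X b a s.
Proof. intros [[H ->]|[H ->]]. left; split; auto; apply tsim_sym; auto.
  right; split. intro; apply H, tsim_sym; auto. apply dMX_sym. Qed.
Lemma step_exists a b : exists s, step_cost X a b s /\ s <= dMX X a b.
Proof. destruct (classic (tsim a b)).
  exists 0; split; [left; auto| apply dMX_nonneg].
  exists (dMX X a b); split; [right; auto| lra]. Qed.

Lemma cc_nonneg z w c : ChainCost X z w c -> 0 <= c.
Proof. induction 1. lra. pose proof (step_nonneg _ _ _ H); lra. Qed.
Lemma cc_eq z w c c' : c = c' -> ChainCost X z w c -> ChainCost X z w c'.
Proof. intros ->; auto. Qed.
Lemma cc_app x y z c c' : ChainCost X x y c -> ChainCost X y z c' -> ChainCost X x z (c + c').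
Proof. induction 1; intros H'. apply (cc_eq _ _ c'); [ring|auto].
  apply (cc_eq _ _ (s + (c + c'))); [ring|]. econstructor; eauto. Qed.
Lemma cc_one a b s : step_cost X a b s -> ChainCost X a b s.
Proof. intros H. apply (cc_eq _ _ (s + 0)); [ring|]. econstructor; eauto. constructor. Qed.
Lemma cc_rev z w c : ChainCost X z w c -> ChainCost X w z c.
Proof. induction 1. constructor. apply (cc_eq _ _ (c + s)); [ring|].
  apply cc_app with z1; auto. apply cc_one, step_sym; auto. Qed.

Lemma qd_props z w :
  (forall c, ChainCost X z w c -> qdist X z w <= c) /\
  (forall L, (forall c, ChainCost X z w c -> L <= c) -> L <= qdist X z w).
Proof. apply glb_props.
  destruct (step_exists z w) as [s [Hs _]]. exists s; apply cc_one; auto.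
  apply cc_nonneg. Qed.
Lemma qd_le z w c : ChainCost X z w c -> qdist X z w <= c.
Proof. apply qd_props. Qed.
Lemma qd_ge z w L : (forall c, ChainCost X z w c -> L <= c) -> L <= qdist X z w.
Proof. apply qd_props. Qed.
Lemma qd_nonneg z w : 0 <= qdist X z w.
Proof. apply qd_ge, cc_nonneg. Qed.
Lemma qd_refl z : qdist X z z = 0.
Proof. pose proof (qd_le z z 0 (cc_nil _ _)); pose proof (qd_nonneg z z); lra. Qed.
Lemma qd_approx z w eps : 0 < eps -> exists c, ChainCost X z w c /\ c < qdist X z w + eps.
Proof. intros He. apply NNPP; intro H.
  assert (qdist X z w + eps <= qdist X z w); [|lra].
  apply qd_ge. intros c Hc. apply Rnot_lt_le. intro. apply H; eauto. Qed.
Lemma qd_sym z w : qdist X z w = qdist X w z.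
Proof. apply Rle_antisym; apply qd_ge; intros c Hc; apply qd_le, cc_rev; auto. Qed.
Lemma qd_tri x y z : qdist X x z <= qdist X x y + qdist X y z.
Proof. apply Rnot_lt_le; intro H.
  set (e := (qdist X x z - (qdist X x y + qdist X y z)) / 3).
  assert (He : 0 < e) by (unfold e; lra).
  destruct (qd_approx x y e He) as [c1 [H1 H1']].
  destruct (qd_approx y z e He) as [c2 [H2 H2']].
  pose proof (qd_le _ _ _ (cc_app _ _ _ _ _ H1 H2)). unfold e in *; lra. Qed.
Lemma qd_step a b s : step_cost X a b s -> qdist X a b <= s.
Proof. intros; apply qd_le, cc_one; auto. Qed.
Lemma qd_dMX a b : qdist X a b <= dMX X a b.
Proof. destruct (step_exists a b) as [s [H1 H2]]. pose proof (qd_step _ _ _ H1); lra. Qed.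
Lemma qd_tsim a b : tsim a b -> qdist X a b = 0.
Proof. intros H. pose proof (qd_step a b 0 (or_introl (conj H eq_refl))).
  pose proof (qd_nonneg a b); lra. Qed.
Lemma qd_tsim_l z z' w : tsim z z' -> qdist X z w = qdist X z' w.
Proof. intros H. pose proof (qd_tri z z' w); pose proof (qd_tri z' z w).
  rewrite (qd_tsim _ _ H) in *. rewrite (qd_tsim _ _ (tsim_sym _ _ H)) in *. lra. Qed.
Lemma qd_tsim_r z w w' : tsim w w' -> qdist X z w = qdist X z w'.
Proof. intros H. rewrite (qd_sym z w), (qd_sym z w'). apply qd_tsim_l; auto. Qed.
Lemma qd_same m u v : qdist X (m, u) (m, v) <= d u v / 3.
Proof. pose proof (qd_dMX (m,u) (m,v)). unfold dMX in H. simpl in H.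
  destruct Mpt_eq_dec; [lra|congruence]. Qed.


Definition gx (m : Mpt) (a : R * R) := (mx m + fst a) / 3.
Definition gy (m : Mpt) (a : R * R) := (my m + snd a) / 3.

Lemma S_inj a b : inM0 a -> inM0 b -> S a = S b -> a = b.
Proof. apply (sq_inj _ _ _ Xax). Qed.

Definition TA (z w : Mpt * T) : Prop := z = w \/
  exists a b, inM0 a /\ inM0 b /\ snd z = S a /\ snd w = S b /\
    gx (fst z) a = gx (fst w) b /\ gy (fst z) a = gy (fst w) b.

Lemma tsim_anal z w : tsim z w -> TA z w.
Proof.
  unfold Defs.tsim. induction 1 as [x y H|x|x y H IH|x y z Hxy IH1 Hyz IH2].
  - right. destruct H as [p [q [Hp [Hq [_ [H1 [H2 [H3 H4]]]]]]]].
    exists p, q; unfold gx, gy; tauto.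
  - left; auto.
  - destruct IH as [->|[a [b [Ha [Hb [H1 [H2 [H3 H4]]]]]]]]; [left; auto|].
    right; exists b, a; repeat (split; [solve [auto]|]); auto.
  - destruct IH1 as [->|[a [b [Ha [Hb [H1 [H2 [H3 H4]]]]]]]]; [auto|].
    destruct IH2 as [<-|[a' [b' [Ha' [Hb' [H1' [H2' [H3' H4']]]]]]]].
    + right; exists a, b; tauto.
    + assert (b = a') by (apply S_inj; congruence). subst a'.
      right; exists a, b'; repeat (split; [solve [auto]|]); split; congruence.
Qed.

Lemma g_range m a : inM0 a -> 0 <= gx m a <= 1 /\ 0 <= gy m a <= 1.
Proof. intros [[? ?] [[? ?] _]]. unfold gx, gy.
  destruct (mx_range m) as [ -> | [ -> | -> ]]; destruct (my_range m) as [ -> | [ -> | -> ]]; lra. Qed.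

Lemma lb_S z w c : ChainCost X z w c -> forall n b, inM0 b -> w = (n, S b) ->
  forall a, inM0 a -> Rabs (gx (fst z) a - gx n b) + Rabs (gy (fst z) a - gy n b)
     <= d (snd z) (S a) / 3 + c.
Proof.
  induction 1; intros n b Hb Hw a Ha.
  - subst z. simpl. pose proof (sq2 _ _ _ Xax b a Hb Ha). unfold gx, gy. rabs.
  - specialize (IHChainCost n b Hb Hw).
    pose proof (cc_nonneg _ _ _ H0) as Hc0.
    destruct H as [[Ht ->]|[Ht ->]].
    + destruct (tsim_anal _ _ Ht) as [<-|[a0 [a1 [Ha0 [Ha1 [E0 [E1 [Gx Gy]]]]]]]].
      * specialize (IHChainCost a Ha). lra.
      * specialize (IHChainCost a1 Ha1). rewrite E1, d_refl in IHChainCost.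
        rewrite <- Gx, <- Gy in IHChainCost. rewrite E0.
        pose proof (sq2 _ _ _ Xax a0 a Ha0 Ha) as Hs2. revert IHChainCost Hs2. unfold gx, gy. intros. rabs.
    + unfold dMX. destruct Mpt_eq_dec as [e|ne].
      * specialize (IHChainCost a Ha). rewrite e.
        pose proof (d_tri (snd z1) (snd z0) (S a)) as Ht3. pose proof (d_sym (snd z1) (snd z0)). lra.
      * destruct (g_range (fst z0) a Ha). destruct (g_range n b Hb).
        pose proof (d_nonneg (snd z0) (S a)). rabs.
Qed.

Lemma qd_lbS m a n b : inM0 a -> inM0 b ->
  Rabs (gx m a - gx n b) + Rabs (gy m a - gy n b) <= qdist X (m, S a) (n, S b).
Proof. intros Ha Hb. apply qd_ge. intros c Hc.
  pose proof (lb_S _ _ _ Hc n b Hb eq_refl a Ha). simpl in H. rewrite d_refl in H. lra. Qed.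

Ltac m0_tac := first [eassumption | (unfold inM0, inI; simpl; repeat split; try lra;
     first [left; lra | right; left; lra | right; right; left; lra | right; right; right; lra]) ].
Ltac adj_tac := match goal with |- Defs.tsim _ (_, sqS _ ?a) (_, sqS _ ?b) =>
  unfold Defs.tsim; apply rst_step; unfold rel0; exists a, b end;
  split; [m0_tac|]; split; [m0_tac|];
  split; [unfold adjM; simpl; first
    [left; split; [lra| first [rewrite Rabs_right by lra; lra | rewrite Rabs_left by lra; lra]]
    |right; split; [lra| first [rewrite Rabs_right by lra; lra | rewrite Rabs_left by lra; lra]]] |];
  split; [reflexivity|]; split; [reflexivity|]; simpl; split; lra.
Ltac diag_tac k := match goal with |- Defs.tsim _ (?m, sqS _ (?a1, ?a2)) _ =>
  apply tsim_trans with (y := (k, S (mx m + a1 - mx k, my m + a2 - my k))); simpl; adj_tac end.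

Lemma comb m n a b : inM0 a -> inM0 b -> gx m a = gx n b -> gy m a = gy n b ->
  tsim (m, S a) (n, S b).
Proof.
  intros Ha Hb. unfold gx, gy. destruct a as [a1 a2]; destruct b as [b1 b2].
  pose proof Ha as [[Ha1 Ha2] [[Ha3 Ha4] _]]. pose proof Hb as [[Hb1 Hb2] [[Hb3 Hb4] _]].
  simpl in Ha1, Ha2, Ha3, Ha4, Hb1, Hb2, Hb3, Hb4 |- *.
  intros E1 E2.
  destruct m; destruct n; simpl in E1, E2;
  first [ exfalso; lra
        | (assert (a1 = b1) by lra; assert (a2 = b2) by lra; subst; apply rst_refl)
        | adj_tac
        | diag_tac m00 | diag_tac m02 | diag_tac m20 | diag_tac m22 ].
Qed.

Definition clamp (t : R) := Rmax 0 (Rmin 1 t).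
Lemma clamp_I t : inI (clamp t).
Proof. unfold clamp, inI, Rmax, Rmin; repeat destruct Rle_dec; lra. Qed.
Lemma clamp_id t : inI t -> clamp t = t.
Proof. unfold clamp, inI, Rmax, Rmin; intros; repeat destruct Rle_dec; lra. Qed.
Lemma clamp_lip t t' : Rabs (clamp t - clamp t') <= Rabs (t - t').
Proof. unfold clamp, Rmax, Rmin; repeat destruct Rle_dec; rabs. Qed.

Lemma lip_cont (f : R -> R) : (forall x y, Rabs (f x - f y) <= Rabs (x - y)) -> forall x, continuity_pt f x.
Proof. intros Hf x. unfold continuity_pt, continue_in, limit1_in, limit_in.
  intros eps He. exists eps. split; auto. intros y [_ Hy]. simpl in *. unfold R_dist in *.
  pose proof (Hf y x). lra. Qed.

Lemma edge_min (v : T) (e : R -> R * R) :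
  (forall s t, inI s -> inI t -> d (S (e s)) (S (e t)) = Rabs (t - s)) ->
  (forall t, inI t -> inM0 (e t)) ->
  (forall a, inM0 a -> S a <> v) ->
  exists δ, 0 < δ /\ forall t, inI t -> δ <= d v (S (e t)).
Proof.
  intros He HM Hv.
  set (h := fun t => d v (S (e (clamp t)))).
  assert (Hc : forall x, continuity_pt h x).
  { apply lip_cont. intros x y. unfold h.
    pose proof (d_tri v (S (e (clamp y))) (S (e (clamp x)))).
    pose proof (d_tri v (S (e (clamp x))) (S (e (clamp y)))).
    rewrite He in * by apply clamp_I. pose proof (clamp_lip x y). rabs. }
  destruct (continuity_ab_min h 0 1) as [t0 [Hmin Ht0]]; [lra| intros; apply Hc |].
  exists (h t0). split.
  - unfold h. pose proof (d_nonneg v (S (e (clamp t0)))).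
    destruct (Rle_lt_or_eq_dec _ _ H) as [?|E]; auto. exfalso.
    symmetry in E. apply d_zero in E. apply (Hv (e (clamp t0))); auto. apply HM, clamp_I.
  - intros t Ht. specialize (Hmin t Ht). unfold h at 2 in Hmin. rewrite clamp_id in Hmin; auto.
Qed.

Lemma delta_pos v : (forall a, inM0 a -> S a <> v) ->
  exists δ, 0 < δ /\ δ <= 2 /\ forall a, inM0 a -> δ <= d v (S a).
Proof.
  intros Hv.
  assert (HM1 : forall i, i = 0 \/ i = 1 -> forall t, inI t -> inM0 (i, t)).
  { intros i Hi t Ht. unfold inM0, inI in *; simpl. split; [lra|]. split; [lra|]. lra. }
  assert (HM2 : forall i, i = 0 \/ i = 1 -> forall t, inI t -> inM0 (t, i)).
  { intros i Hi t Ht. unfold inM0, inI in *; simpl. split; [lra|]. split; [lra|]. lra. }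
  destruct (edge_min v (fun t => (0, t))) as [d1 [P1 Q1]]; auto.
  { intros; apply (sq1_v _ _ _ Xax); auto. }
  destruct (edge_min v (fun t => (1, t))) as [d2 [P2 Q2]]; auto.
  { intros; apply (sq1_v _ _ _ Xax); auto. }
  destruct (edge_min v (fun t => (t, 0))) as [d3 [P3 Q3]]; auto.
  { intros; apply (sq1_h _ _ _ Xax); auto. }
  destruct (edge_min v (fun t => (t, 1))) as [d4 [P4 Q4]]; auto.
  { intros; apply (sq1_h _ _ _ Xax); auto. }
  exists (Rmin 2 (Rmin (Rmin d1 d2) (Rmin d3 d4))).
  split. { unfold Rmin; repeat destruct Rle_dec; lra. }
  split. { unfold Rmin; repeat destruct Rle_dec; lra. }
  intros [a1 a2] [Ha1 [Ha2 Hc]]. simpl in *.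
  assert (Hm : Rmin 2 (Rmin (Rmin d1 d2) (Rmin d3 d4)) <= d1 /\
               Rmin 2 (Rmin (Rmin d1 d2) (Rmin d3 d4)) <= d2 /\
               Rmin 2 (Rmin (Rmin d1 d2) (Rmin d3 d4)) <= d3 /\
               Rmin 2 (Rmin (Rmin d1 d2) (Rmin d3 d4)) <= d4)
    by (unfold Rmin; repeat destruct Rle_dec; lra).
  destruct Hc as [ -> | [ -> | [ -> | -> ]]].
  - specialize (Q1 a2 Ha2). simpl in Q1. lra.
  - specialize (Q2 a2 Ha2). simpl in Q2. lra.
  - specialize (Q3 a1 Ha1). simpl in Q3. lra.
  - specialize (Q4 a1 Ha1). simpl in Q4. lra.
Qed.

Lemma potential (f : Mpt * T -> R) :
  (forall a b s, step_cost X a b s -> f a - f b <= s) -> forall z w, f z - f w <= qdist X z w.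
Proof. intros Hf z w. apply qd_ge. induction 1. lra.
  pose proof (Hf _ _ _ H). lra. Qed.

Definition isS (z : Mpt * T) := exists a, inM0 a /\ snd z = S a.

Lemma nonS_zero z w : ~ isS w -> qdist X z w = 0 -> z = w.
Proof.
  intros HnS H0. destruct w as [n v].
  assert (Hv : forall a, inM0 a -> S a <> v).
  { intros a Ha E. apply HnS. exists a; split; auto. }
  destruct (delta_pos v Hv) as [δ [Hδ [Hδ2 Hδa]]].
  set (f := fun z : Mpt * T => if Mpt_eq_dec (fst z) n then Rmin δ (d (snd z) v) / 3 else δ / 3).
  assert (HfS : forall z a, inM0 a -> snd z = S a -> f z = δ / 3).
  { intros z' a Ha E. unfold f. destruct Mpt_eq_dec; auto. rewrite E, d_sym.
    specialize (Hδa a Ha). unfold Rmin; destruct Rle_dec; lra. }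
  assert (Hfr : forall z, 0 <= f z <= δ / 3).
  { intros z'. unfold f. destruct Mpt_eq_dec; [|lra].
    pose proof (d_nonneg (snd z') v). unfold Rmin; destruct Rle_dec; lra. }
  assert (Hstep : forall a b s, step_cost X a b s -> f a - f b <= s).
  { intros a b s [[Ht ->]|[Ht ->]].
    - destruct (tsim_anal _ _ Ht) as [<-|[a0 [a1 [Ha0 [Ha1 [E0 [E1 _]]]]]]]. lra.
      rewrite (HfS a a0), (HfS b a1); auto. lra.
    - unfold dMX. destruct (Mpt_eq_dec (fst a) (fst b)) as [e|ne].
      + pose proof (d_tri (snd a) (snd b) v).
        pose proof (d_nonneg (snd a) (snd b)).
        unfold f. rewrite e. destruct Mpt_eq_dec; [|lra].
        unfold Rmin; repeat destruct Rle_dec; lra.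
      + pose proof (Hfr a); pose proof (Hfr b). lra. }
  pose proof (potential f Hstep z (n, v)). rewrite H0 in H.
  unfold f in H at 2. simpl in H. destruct Mpt_eq_dec; [|congruence].
  rewrite d_refl in H. unfold f in H. destruct Mpt_eq_dec as [e2|ne2].
  - assert (Hd : d (snd z) v = 0).
    { pose proof (d_nonneg (snd z) v). revert H. unfold Rmin; repeat destruct Rle_dec; lra. }
    apply d_zero in Hd. destruct z; simpl in *; subst; auto.
  - revert H. unfold Rmin; repeat destruct Rle_dec; lra.
Qed.

Lemma qd_zero z w : qdist X z w = 0 -> tsim z w.
Proof.
  intros H0. destruct (classic (isS w)) as [Hw|Hw].
  - destruct (classic (isS z)) as [Hz|Hz].
    + destruct Hw as [b [Hb Ew]]; destruct Hz as [a [Ha Ez]].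
      destruct z as [m u]; destruct w as [n v]; simpl in *; subst.
      pose proof (qd_lbS m a n b Ha Hb). rewrite H0 in H.
      apply comb; auto; rabs.
    + rewrite qd_sym in H0. apply nonS_zero in H0; auto. subst; apply tsim_refl.
  - apply nonS_zero in H0; auto. subst; apply tsim_refl.
Qed.

Lemma exist_eq (P Q : Mpt * T -> Prop) H1 H2 : P = Q ->
  (exist _ P H1 : MT X) = exist _ Q H2.
Proof. intros ->. f_equal. apply proof_irrelevance. Qed.
Lemma rep_spec (c : MT X) : proj1_sig c = tsim (rep X c).
Proof. unfold rep. destruct (constructive_indefinite_description _ _) as [z Hz]. simpl. exact Hz. Qed.
Lemma cls_rep (c : MT X) : cls X (rep X c) = c.
Proof. destruct c as [P HP]. unfold cls. apply exist_eq. symmetry. apply (rep_spec (exist _ P HP)). Qed.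
Lemma cls_eq z w : tsim z w -> cls X z = cls X w.
Proof. intros H. unfold cls. apply exist_eq. apply functional_extensionality. intros x.
  apply propositional_extensionality. split; intros.
  apply tsim_trans with z; auto; apply tsim_sym; auto. apply tsim_trans with w; auto. Qed.
Lemma rep_cls z : tsim z (rep X (cls X z)).
Proof. pose proof (rep_spec (cls X z)) as E. simpl in E. rewrite E. apply tsim_refl. Qed.
Lemma MTdist_cls z w : MTdist X (cls X z) (cls X w) = qdist X z w.
Proof. unfold MTdist. rewrite <- (qd_tsim_l z _ _ (rep_cls z)). rewrite <- (qd_tsim_r z w _ (rep_cls w)). auto. Qed.

Lemma MT_metric : IsMetric (MT X) (MTdist X).
Proof. split.
  - intros; apply qd_nonneg.
  - intros c c'. split.
    + intros H. apply qd_zero in H. apply cls_eq in H. rewrite !cls_rep in H. auto.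
    + intros ->. apply qd_refl.
  - intros; apply qd_sym.
  - intros; apply qd_tri.
Qed.

Definition loc (m : Mpt) (p : R * R) := (3 * fst p - mx m, 3 * snd p - my m).

Lemma incell_ex p : inM0 p -> exists m, InCell m p.
Proof.
  destruct p as [p1 p2]. intros [[? ?] [[? ?] Hc]]. simpl in *. unfold InCell; simpl.
  destruct (Rle_dec (3*p1) 1); destruct (Rle_dec (3*p1) 2);
  destruct (Rle_dec (3*p2) 1); destruct (Rle_dec (3*p2) 2);
  first [ exists m00; simpl; lra | exists m01; simpl; lra | exists m02; simpl; lra
        | exists m10; simpl; lra | exists m12; simpl; lra | exists m20; simpl; lra
        | exists m21; simpl; lra | exists m22; simpl; lra | exfalso; lra ].
Qed.

Lemma loc_M0 p m : inM0 p -> InCell m p -> inM0 (loc m p).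
Proof.
  destruct p as [p1 p2]. intros [[? ?] [[? ?] Hc]] Hm. unfold InCell, loc in *; simpl in *.
  unfold inM0, inI; simpl.
  destruct m; simpl in *; (split; [lra|]); (split; [lra|]);
  destruct Hc as [Hc|[Hc|[Hc|Hc]]];
  first [ left; lra | right; left; lra | right; right; left; lra | right; right; right; lra | exfalso; lra ].
Qed.

Lemma loc_g m p : gx m (loc m p) = fst p /\ gy m (loc m p) = snd p.
Proof. unfold gx, gy, loc; simpl; split; field. Qed.

Lemma cellOf_spec p : inM0 p -> InCell (cellOf p) p.
Proof. intros Hp. unfold cellOf. apply epsilon_spec. apply incell_ex; auto. Qed.

Lemma MTS_any p m : inM0 p -> InCell m p -> MTS X p = cls X (m, S (loc m p)).
Proof.
  intros Hp Hm. unfold MTS. cbv zeta. apply cls_eq.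
  pose proof (cellOf_spec p Hp) as Hc.
  destruct (loc_g (cellOf p) p). destruct (loc_g m p).
  apply comb; try apply loc_M0; auto; simpl; unfold loc in *; congruence.
Qed.

Lemma MTdist_MTS p q m n : inM0 p -> inM0 q -> InCell m p -> InCell n q ->
  MTdist X (MTS X p) (MTS X q) = qdist X (m, S (loc m p)) (n, S (loc n q)).
Proof. intros. rewrite (MTS_any p m), (MTS_any q n); auto. apply MTdist_cls. Qed.

Lemma MTS_lb p q : inM0 p -> inM0 q ->
  Rabs (fst p - fst q) + Rabs (snd p - snd q) <= MTdist X (MTS X p) (MTS X q).
Proof. intros Hp Hq. destruct (incell_ex p Hp) as [m Hm]. destruct (incell_ex q Hq) as [n Hn].
  rewrite (MTdist_MTS p q m n); auto.
  pose proof (qd_lbS m (loc m p) n (loc n q) (loc_M0 p m Hp Hm) (loc_M0 q n Hq Hn)).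
  destruct (loc_g m p) as [E1 E2]. destruct (loc_g n q) as [E3 E4].
  rewrite E1, E2, E3, E4 in H. auto. Qed.

Lemma same_cell_ub p q m : inM0 p -> inM0 q -> InCell m p -> InCell m q ->
  MTdist X (MTS X p) (MTS X q) <= d (S (loc m p)) (S (loc m q)) / 3.
Proof. intros. rewrite (MTdist_MTS p q m m); auto. apply qd_same. Qed.

Lemma thirds (f : R -> R -> R) : (forall r s t, f r t <= f r s + f s t) ->
  (forall k r s, (k = 0 \/ k = 1 \/ k = 2) -> k/3 <= r <= (k+1)/3 -> k/3 <= s <= (k+1)/3 ->
     f r s <= Rabs (s - r)) ->
  forall r s, inI r -> inI s -> f r s <= Rabs (s - r).
Proof.
  intros Ht Hk r s Hr Hs. unfold inI in *.
  assert (K0 : forall r s, 0 <= r <= 1/3 -> 0 <= s <= 1/3 -> f r s <= Rabs (s - r))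
    by (intros; apply (Hk 0); lra).
  assert (K1 : forall r s, 1/3 <= r <= 2/3 -> 1/3 <= s <= 2/3 -> f r s <= Rabs (s - r))
    by (intros; apply (Hk 1); lra).
  assert (K2 : forall r s, 2/3 <= r <= 1 -> 2/3 <= s <= 1 -> f r s <= Rabs (s - r))
    by (intros; apply (Hk 2); lra).
  destruct (Rle_dec r (1/3)); destruct (Rle_dec r (2/3));
  destruct (Rle_dec s (1/3)); destruct (Rle_dec s (2/3));
  first
  [ apply K0; lra | apply K1; lra | apply K2; lra
  | (pose proof (Ht r (1/3) s); pose proof (K0 r (1/3)); pose proof (K1 (1/3) s);
     assert (f r (1/3) <= Rabs (1/3 - r)) by (apply K0; lra);
     assert (f (1/3) s <= Rabs (s - 1/3)) by (apply K1; lra); rabs)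
  | (assert (f r (1/3) <= Rabs (1/3 - r)) by (apply K1; lra);
     assert (f (1/3) s <= Rabs (s - 1/3)) by (apply K0; lra);
     pose proof (Ht r (1/3) s); rabs)
  | (assert (f r (2/3) <= Rabs (2/3 - r)) by (apply K1; lra);
     assert (f (2/3) s <= Rabs (s - 2/3)) by (apply K2; lra);
     pose proof (Ht r (2/3) s); rabs)
  | (assert (f r (2/3) <= Rabs (2/3 - r)) by (apply K2; lra);
     assert (f (2/3) s <= Rabs (s - 2/3)) by (apply K1; lra);
     pose proof (Ht r (2/3) s); rabs)
  | (assert (f r (1/3) <= Rabs (1/3 - r)) by (apply K0; lra);
     assert (f (1/3) (2/3) <= Rabs (2/3 - 1/3)) by (apply K1; lra);
     assert (f (2/3) s <= Rabs (s - 2/3)) by (apply K2; lra);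
     pose proof (Ht r (1/3) s); pose proof (Ht (1/3) (2/3) s); rabs)
  | (assert (f r (2/3) <= Rabs (2/3 - r)) by (apply K2; lra);
     assert (f (2/3) (1/3) <= Rabs (1/3 - 2/3)) by (apply K1; lra);
     assert (f (1/3) s <= Rabs (s - 1/3)) by (apply K0; lra);
     pose proof (Ht r (2/3) s); pose proof (Ht (2/3) (1/3) s); rabs) ].
Qed.

Lemma inM0_v i r : (i = 0 \/ i = 1) -> inI r -> inM0 (i, r).
Proof. intros. unfold inM0, inI in *; simpl. split; [lra|]. split; [lra|]. lra. Qed.
Lemma inM0_h i r : (i = 0 \/ i = 1) -> inI r -> inM0 (r, i).
Proof. intros. unfold inM0, inI in *; simpl. split; [lra|]. split; [lra|]. lra. Qed.

Lemma v_ub i r s m : (i = 0 \/ i = 1) -> inI r -> inI s -> InCell m (i, r) -> InCell m (i, s) ->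
  MTdist X (MTS X (i, r)) (MTS X (i, s)) <= Rabs (s - r).
Proof.
  intros Hi Hr Hs H1 H2. eapply Rle_trans; [apply same_cell_ub; eauto using inM0_v|].
  unfold loc; simpl. unfold InCell in *; simpl in *.
  assert (Hi' : 3*i - mx m = 0 \/ 3*i - mx m = 1) by (destruct (mx_range m) as [E|[E|E]]; rewrite E in *; lra).
  rewrite (sq1_v _ _ _ Xax); auto; unfold inI; try lra. rabs.
Qed.

Lemma h_ub i r s m : (i = 0 \/ i = 1) -> inI r -> inI s -> InCell m (r, i) -> InCell m (s, i) ->
  MTdist X (MTS X (r, i)) (MTS X (s, i)) <= Rabs (s - r).
Proof.
  intros Hi Hr Hs H1 H2. eapply Rle_trans; [apply same_cell_ub; eauto using inM0_h|].
  unfold loc; simpl. unfold InCell in *; simpl in *.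
  assert (Hi' : 3*i - my m = 0 \/ 3*i - my m = 1) by (destruct (my_range m) as [E|[E|E]]; rewrite E in *; lra).
  rewrite (sq1_h _ _ _ Xax); auto; unfold inI; try lra. rabs.
Qed.

Lemma MT_sq : IsSqMS (MT X) (MTdist X) (MTS X).
Proof.
  pose proof MT_metric as Hm. split; auto.
  - intros c c'. unfold MTdist. eapply Rle_trans; [apply qd_dMX| apply dMX_le2].
  - intros p q Hp Hq E. pose proof (MTS_lb p q Hp Hq). rewrite E in H.
    rewrite (proj2 (met_zero _ _ Hm _ _) eq_refl) in H.
    destruct p, q; simpl in *. f_equal; rabs.
  - intros i r s Hi Hr Hs. apply Rle_antisym.
    + apply (thirds (fun r s => MTdist X (MTS X (i, r)) (MTS X (i, s)))); auto.
      { intros; apply (met_tri _ _ Hm). }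
      intros k r' s' Hk H1 H2.
      destruct Hi as [-> | ->]; destruct Hk as [-> | [-> | ->]];
      cbv beta; first [ (apply (v_ub _ _ _ m00); unfold InCell, inI; simpl; lra) | (apply (v_ub _ _ _ m01); unfold InCell, inI; simpl; lra) | (apply (v_ub _ _ _ m02); unfold InCell, inI; simpl; lra) | (apply (v_ub _ _ _ m20); unfold InCell, inI; simpl; lra) | (apply (v_ub _ _ _ m21); unfold InCell, inI; simpl; lra) | (apply (v_ub _ _ _ m22); unfold InCell, inI; simpl; lra) ].
    + pose proof (MTS_lb (i, r) (i, s) (inM0_v _ _ Hi Hr) (inM0_v _ _ Hi Hs)). simpl in H. rabs.
  - intros i r s Hi Hr Hs. apply Rle_antisym.
    + apply (thirds (fun r s => MTdist X (MTS X (r, i)) (MTS X (s, i)))); auto.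
      { intros; apply (met_tri _ _ Hm). }
      intros k r' s' Hk H1 H2.
      destruct Hi as [-> | ->]; destruct Hk as [-> | [-> | ->]];
      cbv beta; first [ (apply (h_ub _ _ _ m00); unfold InCell, inI; simpl; lra) | (apply (h_ub _ _ _ m10); unfold InCell, inI; simpl; lra) | (apply (h_ub _ _ _ m20); unfold InCell, inI; simpl; lra) | (apply (h_ub _ _ _ m02); unfold InCell, inI; simpl; lra) | (apply (h_ub _ _ _ m12); unfold InCell, inI; simpl; lra) | (apply (h_ub _ _ _ m22); unfold InCell, inI; simpl; lra) ].
    + pose proof (MTS_lb (r, i) (s, i) (inM0_h _ _ Hi Hr) (inM0_h _ _ Hi Hs)). simpl in H. rabs.
  - intros p q Hp Hq. apply Rle_ge. apply MTS_lb; auto.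
Qed.
End S.

Section Mor.
Variables X Y : SqMS.
Variable f : car X -> car Y.
Hypothesis Hf : IsHom (car X) (car Y) (sqd X) (sqd Y) (sqS X) (sqS Y) f.

Definition Fm (z : Mpt * car X) : Mpt * car Y := (fst z, f (snd z)).

Lemma tsim_map z w : tsim X z w -> tsim Y (Fm z) (Fm w).
Proof.
  unfold Defs.tsim. induction 1 as [x y H|x|x y H IH|x y z Hxy IH1 Hyz IH2].
  - apply rst_step. destruct H as [p [q [Hp [Hq [Ha [H1 [H2 [H3 H4]]]]]]]].
    exists p, q. unfold Fm; simpl. rewrite H1, H2, !(proj2 Hf); auto. tauto.
  - apply rst_refl.
  - apply rst_sym; auto.
  - eapply rst_trans; eauto.
Qed.

Lemma qd_map z w : qdist Y (Fm z) (Fm w) <= qdist X z w.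
Proof.
  apply qd_ge. induction 1.
  - rewrite qd_refl. lra.
  - eapply Rle_trans; [apply (qd_tri Y _ (Fm z1))|].
    enough (qdist Y (Fm z0) (Fm z1) <= s) by lra.
    destruct H as [[Ht ->]|[Ht ->]].
    + rewrite (qd_tsim Y _ _ (tsim_map _ _ Ht)). lra.
    + eapply Rle_trans; [apply qd_dMX|]. unfold dMX, Fm; simpl.
      destruct Mpt_eq_dec; [|lra]. pose proof (proj1 Hf (snd z0) (snd z1)). lra.
Qed.

Lemma MTmap_cls m x : MTmap X Y f (cls X (m, x)) = cls Y (m, f x).
Proof.
  unfold MTmap. apply cls_eq. apply tsim_sym.
  exact (tsim_map _ _ (rep_cls X (m, x))).
Qed.

Lemma MTmap_hom : IsHom (MT X) (MT Y) (MTdist X) (MTdist Y) (MTS X) (MTS Y) (MTmap X Y f).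
Proof.
  split.
  - intros a b. unfold MTmap at 1 2. rewrite MTdist_cls. apply (qd_map (rep X a) (rep X b)).
  - intros p Hp. unfold MTS. cbv zeta. rewrite MTmap_cls. rewrite (proj2 Hf); auto.
    apply loc_M0; auto. apply cellOf_spec; auto.
Qed.
End Mor.

Theorem mainTheorem10 :
  forall X : SqMS,
    (forall z w, MTdist X (cls X z) (cls X w) = qdist X z w) /\
    IsMetric (MT X) (MTdist X) /\
    IsSqMS (MT X) (MTdist X) (MTS X) /\
    (forall p m, inM0 p -> InCell m p ->
       MTS X p = cls X (m, sqS X (3 * fst p - mx m, 3 * snd p - my m))) /\
    (forall (Y : SqMS) (f : car X -> car Y),
       IsHom (car X) (car Y) (sqd X) (sqd Y) (sqS X) (sqS Y) f ->
       IsHom (MT X) (MT Y) (MTdist X) (MTdist Y) (MTS X) (MTS Y) (MTmap X Y f) /\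
       (forall m x, MTmap X Y f (cls X (m, x)) = cls Y (m, f x))) /\
    (forall c : MT X, MTmap X X (fun x => x) c = c) /\
    (forall (Y Z : SqMS) (f : car X -> car Y) (g : car Y -> car Z),
       IsHom (car X) (car Y) (sqd X) (sqd Y) (sqS X) (sqS Y) f ->
       IsHom (car Y) (car Z) (sqd Y) (sqd Z) (sqS Y) (sqS Z) g ->
       forall c : MT X, MTmap X Z (fun x => g (f x)) c = MTmap Y Z g (MTmap X Y f c)).
Proof.
  intros X. split; [apply MTdist_cls|]. split; [apply MT_metric|]. split; [apply MT_sq|].
  split; [intros; apply MTS_any; auto|].
  split; [intros Y f Hf; split; [apply MTmap_hom; auto| apply MTmap_cls; auto]|].
  split.
  - intros c. unfold MTmap. rewrite <- surjective_pairing. apply cls_rep.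
  - intros Y Z f g Hf Hg c.
    change (MTmap X Y f c) with (cls Y (fst (rep X c), f (snd (rep X c)))).
    rewrite MTmap_cls; auto.
Qed.
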